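(* Let $\mathcal T$ be a text, let $u=\mathrm{locus}(\alpha)$ be an explicit node of its suffix tree, and let $\mathtt{st\text{-}lex}[b,e]$ be the range containing the text positions $j\in\mathtt{st\text{-}lex}$ such that $\mathcal T[1,j]$ is suffixed by $\alpha$. Then all (and only) the letters labeling the outgoing edges from node $u$ appear in $\mathcal L[b,e]\setminus\{\#\}$, that is, $\mathrm{out}(u)=\{c: c\in\mathcal L[b,e]\wedge c\ne\#\}$.
   Context: A text is a string $\mathcal T\in\Sigma^n$ over an integer alphabet whose last symbol $\mathcal T[n]=\$$ occurs only there and is smallest. $\mathrm{locus}(\alpha)$ is the suffix tree node whose root-to-node path label is $\alpha$; $\mathrm{out}(u)$ is the set of first characters of the labels of the outgoing edges of $u$. $\mathrm{ISA}[i]$ is the lexicographic rank of suffix $\mathcal T[i,n]$. For $i\ne j$, $\mathrm{rlce}(i,j)$ is the length of the longest common prefix of $\mathcal T[i,n]$ and $\mathcal T[j,n]$. For a permutation $\pi$, $\mathrm{LPF}_\pi[i]=0$ if $\pi(i)=1$, else $\mathrm{LPF}_\pi[i]=\max_{\pi(j)<\pi(i)}\mathrm{rlce}(j,i)$, and $\mathrm{PDA}_\pi=\{i+\mathrm{LPF}_\pi[i]:i\in[n]\}$. Let $\mathtt{st\text{-}lex}^-=\mathrm{PDA}_\pi$ for $\pi(i)=\mathrm{ISA}[i]$ and $\mathtt{st\text{-}lex}^+=\mathrm{PDA}_{\bar\pi}$ for $\bar\pi(i)=n-\mathrm{ISA}[i]+1$. The array $\mathtt{st\text{-}lex}$ lists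 the set $\{i-1: i\in\mathtt{st\text{-}lex}^-\cup\mathtt{st\text{-}lex}^+\cup\{n+1\}\}$ sorted colexicographically by the prefixes $\mathcal T[1,j]$ ($\mathcal T[1,0]$ being empty). With $\#\notin\Sigma$ a new symbol, $\mathcal L$ is the string of length $|\mathtt{st\text{-}lex}|$ with $\mathcal L[i]=\#$ if $\mathtt{st\text{-}lex}[i]=n$ and $\mathcal L[i]=\mathcal T[\mathtt{st\text{-}lex}[i]+1]$ otherwise. *)

(* Defs.v *)
(* Texts are sequences of naturals (integer alphabet).
   Positions are 1-indexed as in the paper unless stated otherwise. *)
From mathcomp Require Import all_boot.
Set Implicit Arguments. Unset Strict Implicit. Unset Printing Implicit Defensive.

Definition is_text (T : seq nat) : Prop :=
  0 < size T /\ forall k, k < (size T).-1 -> last 0 T < nth 0 T k.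

Fixpoint lex_le (s t : seq nat) : bool :=
  match s, t with
  | [::], _ => true
  | _ :: _, [::] => false
  | a :: s', b :: t' => (a < b) || ((a == b) && lex_le s' t')
  end.

Definition colex_le (s t : seq nat) : bool := lex_le (rev s) (rev t).

Fixpoint lcp (s t : seq nat) : nat :=
  match s, t with
  | a :: s', b :: t' => if a == b then (lcp s' t').+1 else 0
  | _, _ => 0
  end.

Section Text.
Variable T : seq nat.
Local Notation n := (size T).

(* suffix T[i,n], 1-indexed i *)
Definition sufT (i : nat) : seq nat := drop i.-1 T.

Definition ISA (i : nat) : nat :=
  count (fun j => lex_le (sufT j) (sufT i)) (iota 1 n).

Definition rlce (i j : nat) : nat := lcp (sufT i) (sufT j).

Definition LPF (pi : nat -> nat) (i : nat) : nat :=
  if pi i == 1 then 0 else \max_(j <- iota 1 n | pi j < pi i) rlce j i.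

(* PDA_pi as a sequence of values (set semantics) *)
Definition PDA (pi : nat -> nat) : seq nat := [seq i + LPF pi i | i <- iota 1 n].

Definition pi_minus (i : nat) : nat := ISA i.
Definition pi_plus (i : nat) : nat := n - ISA i + 1.

Definition st_lex_minus : seq nat := PDA pi_minus.
Definition st_lex_plus : seq nat := PDA pi_plus.

(* st-lex: the set {i-1 : i in st-lex^- U st-lex^+ U {n+1}}, sorted
   colexicographically by the prefixes T[1,j]; stored 0-indexed. *)
Definition st_lex : seq nat :=
  sort (fun j j' => colex_le (take j T) (take j' T))
       (undup [seq i.-1 | i <- st_lex_minus ++ st_lex_plus ++ [:: n.+1]]).

(* L: None encodes #; L[i] = T[st_lex[i]+1] (1-indexed) = nth 0 T st_lex[i]. *)
Definition Lseq : seq (option nat) :=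
  [seq (if j == n then None else Some (nth 0 T j)) | j <- st_lex].

(* The node locus(alpha)
   is explicit iff alpha is the root, a branching node (alpha is followed in
   the trie by two distinct letters) or a leaf (alpha is a suffix of T). *)
Definition trie_child (alpha : seq nat) (c : nat) : Prop :=
  exists i, prefix (rcons alpha c) (drop i T).

Definition explicit_node (alpha : seq nat) : Prop :=
  alpha = [::] \/
  (exists c1 c2, c1 <> c2 /\ trie_child alpha c1 /\ trie_child alpha c2) \/
  (alpha <> [::] /\ suffix alpha T).

(* out(locus alpha): first letters of the labels of outgoing edges *)
Definition out (alpha : seq nat) : nat -> Prop := trie_child alpha.

End Text.

(* Main.v *)
Require Import Defs.
From mathcomp Require Import all_boot.
From mathcomp Require Import zify.

Lemma lex_le_refl s : lex_le s s.
Proof. by elim: s => //= a s ->; rewrite eqxx orbT. Qed.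

Lemma lex_le_trans s t u : lex_le s t -> lex_le t u -> lex_le s u.
Proof.
elim: s t u => [|a s IH] [|b t] [|c u] //=.
move=> /orP[ab|/andP[/eqP ab st]] /orP[bc|/andP[/eqP bc tu]].
- by rewrite (ltn_trans ab bc).
- by rewrite -bc ab.
- by rewrite ab bc.
- by rewrite ab bc eqxx (IH _ _ st tu) orbT.
Qed.

Lemma lex_le_cat a s t : lex_le (a ++ s) (a ++ t) = lex_le s t.
Proof. by elim: a => //= x a ->; rewrite ltnn eqxx. Qed.

Lemma count_lt (X : eqType) (P Q : pred X) s x :
  (forall y, P y -> Q y) -> x \in s -> Q x -> ~~ P x -> count P s < count Q s.
Proof.
move=> PQ; elim: s => //= y s IH; rewrite inE => /orP[/eqP->|xs] Qx nPx.
- rewrite Qx (negbTE nPx) /= add0n add1n ltnS. exact: sub_count.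
- have := IH xs Qx nPx. case Py: (P y); first by rewrite (PQ _ Py).
  case: (Q y) => /=; lia.
Qed.

Lemma lcp_prefix_ge a s t : prefix a s -> prefix a t -> size a <= lcp s t.
Proof.
elim: a s t => [|x a IH] [|y s] [|z t] //=.
move=> /andP[/eqP<- ps] /andP[/eqP<- pt]; rewrite eqxx ltnS; exact: IH.
Qed.

Lemma lcp_prefix_le u s t : prefix u t -> size u <= lcp s t -> prefix u s.
Proof.
elim: u s t => [|x u IH] [|y s] [|z t] //=.
move=> /andP[/eqP<- pt]; case: eqP => // -> ; rewrite ltnS eqxx /= => h.
exact: IH pt h.
Qed.

Lemma lcp_le_size s t : lcp s t <= size t.
Proof. elim: s t => [|x s IH] [|y t] //=; case: eqP => // _; rewrite ltnS; exact: IH. Qed.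

Section Main.
Variable T : seq nat.
Local Notation n := (size T).

Lemma ISA_le i : ISA T i <= n.
Proof. by rewrite /ISA; apply: leq_trans (count_size _ _) _; rewrite size_iota. Qed.

Lemma ISA_lt j i : i \in iota 1 n ->
  lex_le (sufT T j) (sufT T i) -> ~~ lex_le (sufT T i) (sufT T j) ->
  ISA T j < ISA T i.
Proof.
move=> iin ji nij; rewrite /ISA.
apply: (@count_lt _ _ _ _ i) => //.
- by move=> y yj; exact: lex_le_trans yj ji.
- exact: lex_le_refl.
Qed.

Lemma ISA_ge1 i : i \in iota 1 n -> 0 < ISA T i.
Proof. by move=> iin; rewrite /ISA -has_count; apply/hasP; exists i => //; exact: lex_le_refl. Qed.

Lemma LPF_le pi i : i \in iota 1 n -> i + LPF T pi i <= n.+1.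
Proof.
rewrite mem_iota => /andP[i1 i2].
rewrite /LPF; case: ifP => _; first lia.
have: \max_(j <- iota 1 n | pi j < pi i) rlce T j i <= n - i.-1.
  apply/bigmax_leqP_seq => j _ _; rewrite /rlce.
  by apply: leq_trans (lcp_le_size _ _) _; rewrite /sufT size_drop.
lia.
Qed.

Lemma st_lex_le j : j \in st_lex T -> j <= n.
Proof.
rewrite /st_lex mem_sort mem_undup => /mapP[v]; rewrite !mem_cat => vin ->.
case/or3P: vin => [|| /[!inE] /eqP -> //].
- by rewrite /st_lex_minus /PDA => /mapP[i iin ->]; have := LPF_le (pi_minus T) i iin; lia.
- by rewrite /st_lex_plus /PDA => /mapP[i iin ->]; have := LPF_le (pi_plus T) i iin; lia.
Qed.

Lemma LPF_eq pi i alpha c : i \in iota 1 n ->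
  prefix (rcons alpha c) (sufT T i) ->
  (forall k, k \in iota 1 n -> pi k < pi i -> ~~ prefix (rcons alpha c) (sufT T k)) ->
  alpha = [::] \/ (pi i != 1 /\ exists2 k, k \in iota 1 n & pi k < pi i /\ prefix alpha (sufT T k)) ->
  LPF T pi i = size alpha.
Proof.
move=> iin pi_ mn C.
have pai : prefix alpha (sufT T i).
  by apply: prefix_trans pi_; rewrite -cats1 prefix_prefix.
rewrite /LPF; case: ifP => [/eqP p1|/negbT p1].
  by case: C => [->//|[]]; rewrite p1.
apply/eqP; rewrite eqn_leq; apply/andP; split.
  apply/bigmax_leqP_seq => k kin pk; rewrite /rlce leqNgt; apply/negP => h.
  have := mn k kin pk; by rewrite (@lcp_prefix_le _ (sufT T k) _ pi_) // size_rcons.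
case: C => [->//|[_ [k kin [pk pak]]]].
apply: (bigmaxn_sup_seq _ kin pk); exact: lcp_prefix_ge.
Qed.

Lemma in_st_lex_minus i : i \in iota 1 n -> (i + LPF T (pi_minus T) i).-1 \in st_lex T.
Proof.
by move=> iin; rewrite /st_lex mem_sort mem_undup; apply: map_f;
  rewrite mem_cat /st_lex_minus /PDA (map_f (fun i => i + LPF T (pi_minus T) i) iin).
Qed.

Lemma in_st_lex_plus i : i \in iota 1 n -> (i + LPF T (pi_plus T) i).-1 \in st_lex T.
Proof.
by move=> iin; rewrite /st_lex mem_sort mem_undup; apply: map_f;
  rewrite !mem_cat /st_lex_plus /PDA (map_f (fun i => i + LPF T (pi_plus T) i) iin) orbT.
Qed.

End Main.

Lemma occ_pos (T : seq nat) alpha q x : prefix (rcons alpha x) (drop q T) ->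
  q.+1 \in iota 1 (size T) /\ exists w, sufT T q.+1 = alpha ++ x :: w.
Proof.
move=> /prefixP[w dq]; split.
  rewrite mem_iota; apply/andP; split => //.
  have := congr1 size dq; rewrite size_drop size_cat size_rcons => H.
  have H2 : 0 < size T - q by rewrite H. lia.
by exists w; rewrite /sufT /= dq -cats1 -catA.
Qed.

Theorem corollary25 (T : seq nat) (alpha : seq nat) (b e : nat) :
  is_text T ->
  explicit_node T alpha ->
  (forall i, (b <= i <= e) <->
             (i < size (st_lex T) /\ suffix alpha (take (nth 0 (st_lex T) i) T))) ->
  forall c : nat,
    out T alpha c <-> exists2 i, b <= i <= e & nth None (Lseq T) i = Some c.
Proof.
move=> [n0 txt] expl rng c; split; last first.
  case=> k /rng [ks sf]; rewrite /Lseq (nth_map 0) //.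
  set j := nth 0 (st_lex T) k.
  have jle : j <= size T by apply: st_lex_le; exact: mem_nth.
  case: eqP => // jn [<-].
  have jlt : j < size T by lia.
  case/suffixP: sf => s tj.
  exists (size s); apply/prefixP; exists (drop j.+1 T).
  rewrite -{1}(cat_take_drop j T) tj -catA drop_size_cat // (drop_nth 0 jlt).
  by rewrite -cats1 -!catA.
case=> p pp.
have finish : forall pi i, i \in iota 1 (size T) ->
    prefix (rcons alpha c) (sufT T i) -> LPF T pi i = size alpha ->
    (i + LPF T pi i).-1 \in st_lex T ->
    exists2 i, b <= i <= e & nth None (Lseq T) i = Some c.
  move=> pi i iin /prefixP[w si] -> jin.
  move: iin; rewrite mem_iota => /andP[i1 _].
  set j := (i + size alpha).-1 in jin.
  have dj : drop j T = c :: w.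
    rewrite /j (_ : (i + size alpha).-1 = size alpha + i.-1); last lia.
    by rewrite -drop_drop -/(sufT T i) si -cats1 -catA drop_size_cat.
  have tj : take j T = take i.-1 T ++ alpha.
    rewrite /j (_ : (i + size alpha).-1 = i.-1 + size alpha); last lia.
    by rewrite takeD -/(sufT T i) si -cats1 -catA take_size_cat.
  have jlt : j < size T.
    have := congr1 size dj; rewrite size_drop /=; lia.
  have cj : nth 0 T j = c by rewrite -[j]addn0 -nth_drop dj.
  exists (index j (st_lex T)).
    apply/rng; rewrite index_mem jin nth_index // tj; split => //.
    exact: suffix_suffix.
  rewrite /Lseq (nth_map 0) ?index_mem // nth_index // cj.
  by rewrite (_ : (j == size T) = false) //; apply/negbTE; rewrite neq_ltn jlt.
have [iin0 _] := occ_pos _ _ _ _ pp.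
pose P := fun i => prefix (rcons alpha c) (sufT T i).
have P0 : P p.+1 by [].
have exm : exists m, has (fun i => P i && (ISA T i == m)) (iota 1 (size T)).
  by exists (ISA T p.+1); apply/hasP; exists p.+1 => //; rewrite P0 eqxx.
have minus_case : (alpha = [::] \/ exists2 d, d < c & exists q, prefix (rcons alpha d) (drop q T)) ->
    exists2 i, b <= i <= e & nth None (Lseq T) i = Some c.
  move=> C; case: (ex_minnP exm) => m /hasP[i iin /andP[Pi /eqP Im]] mmin.
  apply: (finish (pi_minus T) i iin Pi); last exact: in_st_lex_minus.
  apply: (@LPF_eq T _ i alpha c iin Pi).
    move=> k kin; rewrite /pi_minus Im => lt; apply/negP => Pk.
    have : m <= ISA T k by apply: mmin; apply/hasP; exists k => //; rewrite eqxx andbT.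
    lia.
  case: C => [->|[d dc [q pq]]]; [by left|right].
  have [jin [w' sj]] := occ_pos _ _ _ _ pq.
  case/prefixP: Pi => w si; rewrite -cats1 -catA /= in si.
  have lt : ISA T q.+1 < ISA T i.
    apply: ISA_lt => //; rewrite sj si lex_le_cat /= ?dc //.
    by rewrite ltnNge (ltnW dc) /= (gtn_eqF dc).
  split; first by rewrite /pi_minus; have := ISA_ge1 T q.+1 jin; lia.
  exists q.+1 => //; split => //; rewrite sj; exact: prefix_prefix.
have plus_case : (exists2 d, c < d & exists q, prefix (rcons alpha d) (drop q T)) ->
    exists2 i, b <= i <= e & nth None (Lseq T) i = Some c.
  move=> C.
  have ub : forall m, has (fun i => P i && (ISA T i == m)) (iota 1 (size T)) -> m <= size T.
    by move=> m /hasP[i _ /andP[_ /eqP <-]]; exact: ISA_le.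
  case: (ex_maxnP exm ub) => m /hasP[i iin /andP[Pi /eqP Im]] mmax.
  apply: (finish (pi_plus T) i iin Pi); last exact: in_st_lex_plus.
  apply: (@LPF_eq T _ i alpha c iin Pi).
    move=> k kin; rewrite /pi_plus => lt; apply/negP => Pk.
    have : ISA T k <= m by apply: mmax; apply/hasP; exists k => //; rewrite eqxx andbT.
    have := ISA_le T k; have := ISA_le T i; lia.
  right; case: C => [d dc [q pq]].
  have [jin [w' sj]] := occ_pos _ _ _ _ pq.
  case/prefixP: Pi => w si; rewrite -cats1 -catA /= in si.
  have lt : ISA T i < ISA T q.+1.
    apply: ISA_lt => //; rewrite sj si lex_le_cat /= ?dc //.
    by rewrite ltnNge (ltnW dc) /= (gtn_eqF dc).
  have := ISA_le T q.+1; have := ISA_le T i => h1 h2.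
  split; first by rewrite /pi_plus; lia.
  exists q.+1 => //; split; first by rewrite /pi_plus; lia.
  rewrite sj; exact: prefix_prefix.
case: expl => [a0|[[c1 [c2 [c12 [[q1 t1] [q2 t2]]]]]|[an sa]]].
- by apply: minus_case; left.
- have [d [dc [q pq]]] : exists d, d <> c /\ exists q, prefix (rcons alpha d) (drop q T).
    case: (eqVneq c1 c) => [e1|n1].
      by exists c2; split; [move=> e2; apply: c12; rewrite e1 e2 | exists q2].
    by exists c1; split; [apply/eqP | exists q1].
  case: (ltngtP d c) => [lt|gt|eq] //.
    by apply: minus_case; right; exists d => //; exists q.
  by apply: plus_case; exists d => //; exists q.
- exfalso; case/suffixP: sa => s Ts.
  case E: alpha an => [//|x0 s0] _.
  move: pp Ts; rewrite E (lastI x0 s0).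
  move: (belast x0 s0) (last x0 s0) => a' z /prefixP[w dp] Ts.
  have sz : size T - p = size a' + 2 + size w.
    by rewrite -size_drop dp size_cat !size_rcons -addn2.
  have hk : p + size a' < (size T).-1.
    have h : 0 < size T - p by rewrite sz; lia.
    have h' : size T - p = size a' + 2 + size w by [].
    lia.
  have := txt _ hk.
  rewrite -nth_drop dp nth_cat size_rcons ltnS size_rcons leqnSn !nth_rcons size_rcons ltnS leqnn ltnn eqxx.
  by rewrite Ts last_cat last_rcons ltnn.
Qed.
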